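(* Let $r=\frac{e^2-1}{e^2+1}$, $\mathbb{D}_K(1)=\{|x|<r\}$, and let $\mathcal{F}$ be the Finsler metric on $\mathbb{D}_K(1)$ defined below. Let $d(x,y)=\inf_\sigma\int_a^b\mathcal{F}(\sigma(t),\dot\sigma(t))\,dt$, the infimum over all piecewise $C^1$ curves $\sigma:[a,b]\to\mathbb{D}_K(1)$ with $\sigma(a)=x$, $\sigma(b)=y$. Then for all $x\neq y$ in $\mathbb{D}_K(1)$, $$d(x,y)=\log\frac{\sinh d_K(x,\mathfrak{a})}{\sinh d_K(y,\mathfrak{a})},$$ where $\mathfrak{a}$ is the point where the Euclidean ray from $x$ through $y$ meets the circle $\{|z|=r\}$.
   Context: $d_K$ is the Klein distance on $\mathbb{D}_E(1)=\{|x|<1\}$: $d_K(x,y)=\tfrac12\log\frac{|x-a||y-b|}{|y-a||x-b|}$ for $x\neq y$, with $a$ (resp. $b$) the intersection of the Euclidean ray from $x$ through $y$ (resp. from $y$ through $x$) with the unit circle. $\alpha_K(x,\xi)=\frac{\sqrt{(1-|x|^2)|\xi|^2+\langle x,\xi\rangle^2}}{1-|x|^2}$. For $x\in\mathbb{D}_K(1)$, $\xi\neq0$: $\mathcal{F}(x,\xi)=\coth(d_K(x,\mathfrak{a}(x,\xi)))\,\alpha_K(x,\xi)$, where $\mathfrak{a}(x,\xi)$ is the unique $x+s\xi$, $s>0$, with $|x+s\xi|=r$; equivalently $\mathcal{F}(x,\xi)=\frac{\sqrt{(r^2-|x|^2)|\xi|^2+\langle x,\xi\rangle^2}}{r^2-|x|^2}+\frac{(1-r^2)\langle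 x,\xi\rangle}{(r^2-|x|^2)(1-|x|^2)}$. *)

(* Defs.v *)
From Stdlib Require Import Reals List ClassicalEpsilon.
From Coquelicot Require Import Coquelicot.
Open Scope R_scope.

Definition pt : Type := (R * R)%type.
Definition padd (p q : pt) : pt := (fst p + fst q, snd p + snd q).
Definition psub (p q : pt) : pt := (fst p - fst q, snd p - snd q).
Definition pscal (s : R) (p : pt) : pt := (s * fst p, s * snd p).
Definition pdot (p q : pt) : R := fst p * fst q + snd p * snd q.
Definition pnorm (p : pt) : R := sqrt (pdot p p).

Definition ray_hit (rho : R) (x v : pt) : pt :=
  epsilon (inhabits (0, 0))
    (fun p => exists s, 0 < s /\ p = padd x (pscal s v) /\ pnorm p = rho).

Definition dK (x y : pt) : R :=
  if excluded_middle_informative (x = y) then 0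
  else
    let a := ray_hit 1 x (psub y x) in
    let b := ray_hit 1 y (psub x y) in
    / 2 * ln ((pnorm (psub x a) * pnorm (psub y b)) /
              (pnorm (psub y a) * pnorm (psub x b))).

Definition alphaK (x xi : pt) : R :=
  sqrt ((1 - pnorm x ^ 2) * pnorm xi ^ 2 + pdot x xi ^ 2) / (1 - pnorm x ^ 2).

Definition rK : R := (exp 2 - 1) / (exp 2 + 1).

Definition coth (t : R) : R := cosh t / sinh t.

Definition FK (x xi : pt) : R :=
  if excluded_middle_informative (xi = (0, 0)) then 0
  else coth (dK x (ray_hit rK x xi)) * alphaK x xi.

Definition dcurve (g : R -> pt) (t : R) : pt :=
  (Derive (fun s => fst (g s)) t, Derive (fun s => snd (g s)) t).

Definition C1 (g : R -> pt) : Prop :=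
  forall t,
    ex_derive (fun s => fst (g s)) t /\ ex_derive (fun s => snd (g s)) t /\
    continuous (Derive (fun s => fst (g s))) t /\
    continuous (Derive (fun s => snd (g s))) t.

(* Partition t0 < t1 < ... with sigma agreeing on [t_i, t_{i+1}] with the
   C^1 function gs i. *)
Fixpoint pw_ok (sigma : R -> pt) (gs : nat -> R -> pt) (i : nat) (t0 : R)
  (ts : list R) : Prop :=
  match ts with
  | nil => True
  | t1 :: ts' =>
      t0 < t1 /\ C1 (gs i) /\ (forall t, t0 <= t <= t1 -> gs i t = sigma t) /\
      pw_ok sigma gs (S i) t1 ts'
  end.

Fixpoint pw_len (gs : nat -> R -> pt) (i : nat) (t0 : R) (ts : list R) : R :=
  match ts with
  | nil => 0
  | t1 :: ts' =>
      RInt (fun t => FK (gs i t) (dcurve (gs i) t)) t0 t1 + pw_len gs (S i) t1 ts'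
  end.

Definition curve_lengths (x y : pt) (L : R) : Prop :=
  exists (a b : R) (sigma : R -> pt) (ts : list R) (gs : nat -> R -> pt),
    ts <> nil /\ last ts a = b /\ pw_ok sigma gs 0 a ts /\
    sigma a = x /\ sigma b = y /\
    (forall t, a <= t <= b -> pnorm (sigma t) < rK) /\
    L = pw_len gs 0 a ts.

Definition is_inf (S : R -> Prop) (m : R) : Prop :=
  (forall l, S l -> m <= l) /\ (forall m', (forall l, S l -> m' <= l) -> m' <= m).

(* Main.v *)
Require Import Defs.
From Stdlib Require Import Reals Lra Psatz ClassicalEpsilon List FunctionalExtensionality.
From Coquelicot Require Import Coquelicot.
Open Scope R_scope.

Lemma pdot_ge0 p : 0 <= pdot p p.
Proof. destruct p as [p1 p2]; unfold pdot; simpl; nra. Qed.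

Lemma pnorm_sq p : pnorm p ^ 2 = pdot p p.
Proof. unfold pnorm; rewrite pow2_sqrt; [reflexivity| apply pdot_ge0]. Qed.

Lemma pnorm_lt p rho : 0 < rho -> pnorm p < rho -> pdot p p < rho^2.
Proof.
  intros Hr H. rewrite <- pnorm_sq. assert (0 <= pnorm p) by (apply sqrt_pos). nra.
Qed.

Lemma pnorm_eq p rho : 0 <= rho -> pnorm p = rho <-> pdot p p = rho^2.
Proof.
  intros Hr; split; intro H.
  - rewrite <- pnorm_sq, H; reflexivity.
  - unfold pnorm; rewrite H. apply sqrt_lem_1; nra.
Qed.

Lemma pt_nz_pos v : v <> (0,0) -> 0 < pdot v v.
Proof.
  destruct v as [v1 v2]; unfold pdot; simpl; intro H.
  destruct (Req_dec v1 0); destruct (Req_dec v2 0); subst; try (exfalso; apply H; reflexivity); nra.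
Qed.

Lemma quad_root V p C : 0 < V -> 0 < C ->
  let s := (sqrt (p^2 + V*C) - p) / V in
  0 < s /\ V*s^2 + 2*p*s - C = 0 /\ /s = (sqrt (p^2 + V*C) + p)/C.
Proof.
  intros HV HC s.
  set (S := sqrt (p^2 + V*C)).
  assert (HS2 : S*S = p^2+V*C) by (unfold S; apply sqrt_sqrt; nra).
  assert (HS0 : 0 <= S) by apply sqrt_pos.
  assert (HSp : p < S) by nra.
  assert (HSm : -p < S) by nra.
  unfold s; fold S. split; [|split].
  - apply Rdiv_lt_0_compat; lra.
  - replace (V*((S-p)/V)^2 + 2*p*((S-p)/V) - C) with ((S*S - p^2 - V*C)/V) by (field; lra).
    rewrite HS2. field; lra.
  - apply (Rmult_eq_reg_r (((S-p)/V)*C)); [|apply Rmult_integral_contrapositive; split; [apply Rgt_not_eq, Rdiv_lt_0_compat|]; lra].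
    replace (/ ((S - p) / V) * ((S - p) / V * C)) with C by (field; lra).
    replace ((S + p) / C * ((S - p) / V * C)) with ((S*S - p^2)/V) by (field; lra).
    rewrite HS2; field; lra.
Qed.

Lemma quad_uniq V p C s1 s2 : 0 < V -> 0 < C -> 0 < s1 -> 0 < s2 ->
  V*s1^2 + 2*p*s1 - C = 0 -> V*s2^2 + 2*p*s2 - C = 0 -> s1 = s2.
Proof.
  intros HV HC H1 H2 E1 E2.
  destruct (Req_dec s1 s2) as [|Hne]; [assumption|exfalso].
  assert (Hs : V*(s1+s2) + 2*p = 0).
  { assert ((s1-s2)*(V*(s1+s2)+2*p) = 0) by nra.
    apply Rmult_integral in H. destruct H; [lra|assumption]. }
  assert (V*s1*s2 + C = 0) by nra.
  assert (0 < V*s1*s2) by (apply Rmult_lt_0_compat; [apply Rmult_lt_0_compat|]; lra).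
  lra.
Qed.

Lemma ray_hit_spec rho z v : 0 < rho -> pdot z z < rho^2 -> v <> (0,0) ->
  exists s, 0 < s /\ ray_hit rho z v = padd z (pscal s v) /\
    pdot (ray_hit rho z v) (ray_hit rho z v) = rho^2.
Proof.
  intros Hr Hz Hv.
  assert (HV := pt_nz_pos v Hv).
  unfold ray_hit.
  match goal with |- context [epsilon ?i ?P] =>
    assert (HE : exists q, P q); [| destruct (epsilon_spec i P HE) as (s & Hs & Heq & Hn)] end.
  - destruct (quad_root (pdot v v) (pdot z v) (rho^2 - pdot z z)) as (Hs & Heq & _); [lra|lra|].
    set (s := (sqrt (pdot z v ^ 2 + pdot v v * (rho ^ 2 - pdot z z)) - pdot z v) / pdot v v) in *.
    exists (padd z (pscal s v)), s. split; [assumption|split;[reflexivity|]].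
    apply pnorm_eq; [lra|].
    destruct z as [z1 z2]; destruct v as [v1 v2]; unfold pdot, padd, pscal in *; simpl in *. nra.
  - exists s. split; [assumption|split;[assumption|]]. apply pnorm_eq in Hn; [assumption|lra].
Qed.
Lemma pnorm_scal c v : 0 <= c -> pnorm (pscal c v) = c * pnorm v.
Proof.
  intro Hc. unfold pnorm.
  replace (pdot (pscal c v) (pscal c v)) with (c*c*pdot v v)
    by (destruct v; unfold pdot, pscal; simpl; ring).
  rewrite sqrt_mult; [|nra|apply pdot_ge0]. rewrite sqrt_square; [reflexivity|lra].
Qed.

Lemma pnorm_sym a z : pnorm (psub z a) = pnorm (psub a z).
Proof. destruct a, z; unfold pnorm, pdot, psub; simpl. f_equal; ring. Qed.

Lemma root_gt1 P0 q W s : 0 < s -> 0 < W -> P0 < 1 -> P0 + 2*q + W < 1 ->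
  W*s^2 + 2*q*s + P0 - 1 = 0 -> 1 < s.
Proof.
  intros Hs HW H0 H1 E.
  destruct (Rlt_le_dec 1 s) as [|Hle]; [assumption|exfalso].
  assert (Id : W*s^2 + 2*q*s + P0 - 1 = (1-s)*(P0-1) + s*(P0+2*q+W-1) + s*(s-1)*W) by ring.
  assert (A1 : (1-s)*(P0-1) <= 0) by nra.
  assert (A2 : s*(P0+2*q+W-1) < 0) by nra.
  assert (A3 : s*(s-1)*W <= 0).
  { assert (s*(s-1) <= 0) by nra. nra. }
  lra.
Qed.

Lemma psub_nz a z : z <> a -> psub a z <> (0,0).
Proof.
  destruct a as [a1 a2], z as [z1 z2]; unfold psub; simpl; intros H E.
  injection E; intros; apply H; f_equal; lra.
Qed.

Lemma dK_formula z a : pdot z z < 1 -> pdot a a < 1 -> z <> a ->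
  exists s u, 1 < s /\ u < 0 /\
   pdot (psub a z) (psub a z) * s^2 + 2 * pdot z (psub a z) * s + pdot z z - 1 = 0 /\
   pdot (psub a z) (psub a z) * u^2 + 2 * pdot z (psub a z) * u + pdot z z - 1 = 0 /\
   dK z a = /2 * ln (s*(1-u)/((s-1)*(-u))).
Proof.
  intros Hz Ha Hne.
  assert (Hw := psub_nz a z Hne).
  assert (Hw' : psub z a <> (0,0)) by (apply psub_nz; intro; apply Hne; symmetry; assumption).
  assert (HW := pt_nz_pos _ Hw).
  destruct (ray_hit_spec 1 z (psub a z)) as (s & Hs & HA & HnA); [lra|lra|assumption|].
  destruct (ray_hit_spec 1 a (psub z a)) as (t & Ht & HB & HnB); [lra|lra|assumption|].
  unfold dK. destruct (excluded_middle_informative (z = a)) as [|_]; [contradiction|].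
  cbv zeta. rewrite HA, HB in *.
  assert (Es : pdot (psub a z) (psub a z) * s^2 + 2 * pdot z (psub a z) * s + pdot z z - 1 = 0).
  { revert HnA. destruct z, a; unfold pdot, padd, pscal, psub; simpl. intro. nra. }
  assert (Et : pdot (psub a z) (psub a z) * (1-t)^2 + 2 * pdot z (psub a z) * (1-t) + pdot z z - 1 = 0).
  { revert HnB. destruct z, a; unfold pdot, padd, pscal, psub; simpl. intro. nra. }
  assert (Hs1 : 1 < s).
  { apply (root_gt1 (pdot z z) (pdot z (psub a z)) (pdot (psub a z) (psub a z))); try assumption.
    replace (pdot z z + 2 * pdot z (psub a z) + pdot (psub a z) (psub a z)) with (pdot a a)
      by (destruct z, a; unfold pdot, psub; simpl; ring). assumption. }
  assert (Ht1 : 1 < t).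
  { apply (root_gt1 (pdot a a) (pdot a (psub z a)) (pdot (psub z a) (psub z a))); try assumption.
    - apply pt_nz_pos; assumption.
    - replace (pdot a a + 2 * pdot a (psub z a) + pdot (psub z a) (psub z a)) with (pdot z z)
        by (destruct z, a; unfold pdot, psub; simpl; ring). assumption.
    - revert HnB. destruct z, a; unfold pdot, padd, pscal, psub; simpl. intro. nra. }
  exists s, (1-t). split; [assumption|split;[lra|split;[assumption|split;[assumption|]]]].
  replace (psub z (padd z (pscal s (psub a z)))) with (pscal s (psub z a))
    by (destruct z, a; unfold padd, pscal, psub; simpl; f_equal; ring).
  replace (psub a (padd a (pscal t (psub z a)))) with (pscal t (psub a z))
    by (destruct z, a; unfold padd, pscal, psub; simpl; f_equal; ring).
  replace (psub a (padd z (pscal s (psub a z)))) with (pscal (s-1) (psub z a))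
    by (destruct z, a; unfold padd, pscal, psub; simpl; f_equal; ring).
  replace (psub z (padd a (pscal t (psub z a)))) with (pscal (t-1) (psub a z))
    by (destruct z, a; unfold padd, pscal, psub; simpl; f_equal; ring).
  rewrite !pnorm_scal by lra. rewrite pnorm_sym.
  assert (HN : 0 < pnorm (psub a z)).
  { unfold pnorm. apply sqrt_lt_R0. assumption. }
  f_equal. f_equal. field. repeat split; lra.
Qed.

Lemma hyp_half Q : 1 < Q ->
  coth (/2 * ln Q) = (Q+1)/(Q-1) /\ sinh (/2 * ln Q) ^2 = (Q - 2 + /Q)/4 /\ 0 < sinh (/2 * ln Q).
Proof.
  intro HQ. set (d := /2 * ln Q).
  assert (HE : exp d * exp d = Q).
  { rewrite <- exp_plus. replace (d + d) with (ln Q) by (unfold d; field). apply exp_ln; lra. }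
  assert (Hd : 0 < d).
  { unfold d. assert (ln 1 < ln Q) by (apply ln_increasing; lra). rewrite ln_1 in H. lra. }
  assert (HE1 : 1 < exp d) by (rewrite <- exp_0; apply exp_increasing; assumption).
  unfold coth, cosh, sinh. rewrite exp_Ropp. rewrite <- HE.
  assert (Hi : / exp d < 1) by (apply (Rmult_lt_reg_l (exp d)); [lra|]; rewrite Rinv_r; lra).
  split; [|split].
  - field. repeat split; try lra; nra.
  - field. lra.
  - lra.
Qed.

Lemma core_alg W p Z s u : 0 < W -> 1 < s -> u < 0 ->
  W*s^2 + 2*p*s + Z - 1 = 0 -> W*u^2 + 2*p*u + Z - 1 = 0 ->
  1 < s*(1-u)/((s-1)*(-u)) /\
  sqrt (p^2 + (1-Z)*W) = W*(s-u)/2 /\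
  (s*(1-u)/((s-1)*(-u)) + 1)/(s*(1-u)/((s-1)*(-u)) - 1) * (W*(s-u)/2) = 1 - Z - p /\
  (s*(1-u)/((s-1)*(-u)) - 2 + /(s*(1-u)/((s-1)*(-u))))/4 * ((1-Z)*(1-(Z+2*p+W))) = p^2 + (1-Z)*W.
Proof.
  intros HW Hs Hu E1 E2.
  assert (Hsum : W*(s+u) + 2*p = 0).
  { assert ((s-u)*(W*(s+u)+2*p) = 0) by nra.
    apply Rmult_integral in H. destruct H; [lra|assumption]. }
  assert (Hp : p = - W*(s+u)/2) by lra.
  subst p.
  assert (HZ : Z = 1 + W*s*u) by nra.
  subst Z.
  split; [|split; [|split]].
  - replace (s * (1 - u) / ((s - 1) * - u)) with (1 + (s-u)/((s-1)*(-u))) by (field; lra).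
    assert (0 < (s-u)/((s-1)*(-u))) by (apply Rdiv_lt_0_compat; nra). lra.
  - apply sqrt_lem_1; [|nra|].
    + replace ((- W * (s + u) / 2) ^ 2 + (1 - (1 + W * s * u)) * W) with ((W*(s-u)/2)^2) by field. nra.
    + field.
  - field. repeat split; try lra; nra.
  - field. repeat split; try lra; nra.
Qed.

Lemma dK_facts z a : pdot z z < 1 -> pdot a a < 1 -> z <> a ->
  coth (dK z a) * sqrt (pdot z (psub a z) ^ 2 + (1 - pdot z z) * pdot (psub a z) (psub a z))
    = 1 - pdot z z - pdot z (psub a z) /\
  sinh (dK z a) ^ 2 * ((1 - pdot z z) * (1 - pdot a a))
    = pdot z (psub a z) ^ 2 + (1 - pdot z z) * pdot (psub a z) (psub a z) /\
  0 < sinh (dK z a).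
Proof.
  intros Hz Ha Hne.
  destruct (dK_formula z a Hz Ha Hne) as (s & u & Hs & Hu & E1 & E2 & HdK).
  assert (HW : 0 < pdot (psub a z) (psub a z)) by (apply pt_nz_pos, psub_nz; assumption).
  assert (HA : pdot a a = pdot z z + 2 * pdot z (psub a z) + pdot (psub a z) (psub a z))
    by (destruct z, a; unfold pdot, psub; simpl; ring).
  rewrite HA. rewrite HdK.
  destruct (core_alg _ _ _ s u HW Hs Hu E1 E2) as (HQ & Hsq & Hc & Hsh).
  destruct (hyp_half _ HQ) as (Hc' & Hs' & Hp').
  rewrite Hc', Hs', Hsq. split; [|split]; assumption.
Qed.

Lemma rK_bounds : 0 < rK < 1.
Proof.
  unfold rK. assert (1 < exp 2) by (rewrite <- exp_0; apply exp_increasing; lra).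
  split.
  - apply Rdiv_lt_0_compat; lra.
  - apply (Rmult_lt_reg_r (exp 2 + 1)); [lra|]. field_simplify; lra.
Qed.

Lemma sqrt_tt t X : 0 <= t -> 0 <= X -> sqrt (t*t*X) = t * sqrt X.
Proof. intros. rewrite sqrt_mult by nra. rewrite sqrt_square by lra. reflexivity. Qed.

Lemma FK_t z xi t : pdot z z < rK^2 -> xi <> (0,0) -> 0 < t ->
  pdot (padd z (pscal t xi)) (padd z (pscal t xi)) = rK^2 ->
  FK z xi = /t - pdot z xi / (1 - pdot z z).
Proof.
  intros Hz Hxi Ht Hn.
  destruct rK_bounds as [Hr0 Hr1].
  assert (HV := pt_nz_pos xi Hxi).
  unfold FK. destruct (excluded_middle_informative _) as [|_]; [contradiction|].
  destruct (ray_hit_spec rK z xi Hr0 Hz Hxi) as (t' & Ht' & Ha & Hna).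
  set (a := ray_hit rK z xi) in *.
  assert (Htt : t' = t).
  { apply (quad_uniq (pdot xi xi) (pdot z xi) (rK^2 - pdot z z)); try lra.
    - rewrite Ha in Hna. revert Hna. destruct z, xi; unfold pdot, padd, pscal; simpl. intro; nra.
    - revert Hn. destruct z, xi; unfold pdot, padd, pscal; simpl. intro; nra. }
  subst t'.
  assert (Hr2 : rK^2 < 1) by nra.
  assert (Hne : z <> a) by (intro E; rewrite <- E in Hna; lra).
  destruct (dK_facts z a) as (Hc & _ & _); [lra|lra|assumption|].
  unfold alphaK. rewrite !pnorm_sq.
  replace (psub a z) with (pscal t xi) in Hc
    by (rewrite Ha; destruct z, xi; unfold padd, pscal, psub; simpl; f_equal; ring).
  replace (pdot z (pscal t xi) ^ 2 + (1 - pdot z z) * pdot (pscal t xi) (pscal t xi))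
    with (t*t*((1 - pdot z z) * pdot xi xi + pdot z xi ^ 2)) in Hc
    by (destruct z, xi; unfold pdot, pscal; simpl; ring).
  replace (pdot z (pscal t xi)) with (t * pdot z xi) in Hc
    by (destruct z, xi; unfold pdot, pscal; simpl; ring).
  rewrite sqrt_tt in Hc; [|lra|].
  2:{ assert (0 <= pdot z xi ^ 2) by nra. nra. }
  set (c := coth (dK z a)) in *.
  set (S := sqrt ((1 - pdot z z) * pdot xi xi + pdot z xi ^ 2)) in *.
  replace (c * (S / (1 - pdot z z))) with ((c * (t*S)) / (t * (1 - pdot z z))) by (field; lra).
  rewrite Hc. field. lra.
Qed.

Definition Fc (z xi : pt) : R :=
  (pdot z xi + sqrt (pdot z xi ^ 2 + pdot xi xi * (rK^2 - pdot z z))) / (rK^2 - pdot z z)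
  - pdot z xi / (1 - pdot z z).

Definition dG (a z xi : pt) : R :=
  pdot a xi / (rK^2 - pdot z a) - pdot z xi / (1 - pdot z z).

Lemma FK_zero z : FK z (0,0) = 0.
Proof. unfold FK. destruct (excluded_middle_informative _) as [|n]; [reflexivity|contradiction n; reflexivity]. Qed.

Lemma FK_Fc z xi : pdot z z < rK^2 -> FK z xi = Fc z xi.
Proof.
  intros Hz. destruct rK_bounds as [Hr0 Hr1].
  destruct (excluded_middle_informative (xi = (0,0))) as [E|Hxi].
  - subst xi. rewrite FK_zero. unfold Fc.
    replace (pdot z (0,0)) with 0 by (unfold pdot; simpl; ring).
    replace (pdot (0,0) (0,0)) with 0 by (unfold pdot; simpl; ring).
    replace (0 ^ 2 + 0 * (rK ^ 2 - pdot z z)) with 0 by ring. rewrite sqrt_0. field. split; nra.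
  - assert (HV := pt_nz_pos xi Hxi).
    destruct (quad_root (pdot xi xi) (pdot z xi) (rK^2 - pdot z z)) as (Hs & Heq & Hinv); [lra|lra|].
    set (t := (sqrt (pdot z xi ^ 2 + pdot xi xi * (rK ^ 2 - pdot z z)) - pdot z xi) / pdot xi xi) in *.
    assert (Hn : pdot (padd z (pscal t xi)) (padd z (pscal t xi)) = rK^2)
      by (revert Heq; destruct z, xi; unfold pdot, padd, pscal; simpl; intro; nra).
    rewrite (FK_t z xi t Hz Hxi Hs Hn).
    rewrite Hinv. unfold Fc. rewrite (Rplus_comm (pdot z xi)). reflexivity.
Qed.

Lemma CS p q : pdot p q ^ 2 <= pdot p p * pdot q q.
Proof. destruct p as [p1 p2], q as [q1 q2]; unfold pdot; simpl.
  assert (0 <= (p1*q2 - p2*q1)^2) by (apply pow2_ge_0). nra. Qed.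

Lemma calib a z xi : pdot z z < rK^2 -> pdot a a = rK^2 -> dG a z xi <= FK z xi.
Proof.
  intros Hz Ha. destruct rK_bounds as [Hr0 Hr1].
  assert (HD : pdot z a < rK^2).
  { assert (H := CS z a). rewrite Ha in H. assert (0 <= pdot z z) by apply pdot_ge0. nra. }
  destruct (excluded_middle_informative (xi = (0,0))) as [E|Hxi].
  - subst xi. rewrite FK_zero. unfold dG.
    replace (pdot z (0,0)) with 0 by (unfold pdot; simpl; ring).
    replace (pdot a (0,0)) with 0 by (unfold pdot; simpl; ring).
    unfold Rdiv. rewrite !Rmult_0_l. lra.
  - assert (HV := pt_nz_pos xi Hxi).
    destruct (quad_root (pdot xi xi) (pdot z xi) (rK^2 - pdot z z)) as (Hs & Heq & _); [lra|lra|].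
    set (t := (sqrt (pdot z xi ^ 2 + pdot xi xi * (rK ^ 2 - pdot z z)) - pdot z xi) / pdot xi xi) in *.
    assert (Hn : pdot (padd z (pscal t xi)) (padd z (pscal t xi)) = rK^2)
      by (revert Heq; destruct z, xi; unfold pdot, padd, pscal; simpl; intro; nra).
    rewrite (FK_t z xi t Hz Hxi Hs Hn).
    unfold dG.
    assert (Hle : pdot (padd z (pscal t xi)) a <= rK^2).
    { assert (H := CS (padd z (pscal t xi)) a). rewrite Hn, Ha in H. nra. }
    replace (pdot (padd z (pscal t xi)) a) with (pdot z a + t * pdot a xi) in Hle
      by (destruct z, xi, a; unfold pdot, padd, pscal; simpl; ring).
    assert (pdot a xi / (rK ^ 2 - pdot z a) <= / t).
    { apply (Rmult_le_reg_r (t * (rK^2 - pdot z a))); [apply Rmult_lt_0_compat; lra|].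
      replace (pdot a xi / (rK ^ 2 - pdot z a) * (t * (rK ^ 2 - pdot z a))) with (t * pdot a xi) by (field; lra).
      replace (/ t * (t * (rK ^ 2 - pdot z a))) with (rK^2 - pdot z a) by (field; lra). lra. }
    lra.
Qed.

Lemma cp_plus f g x : continuity_pt f x -> continuity_pt g x -> continuity_pt (fun t => f t + g t) x.
Proof. intros; apply (continuity_pt_plus f g); assumption. Qed.
Lemma cp_minus f g x : continuity_pt f x -> continuity_pt g x -> continuity_pt (fun t => f t - g t) x.
Proof. intros; apply (continuity_pt_minus f g); assumption. Qed.
Lemma cp_mult f g x : continuity_pt f x -> continuity_pt g x -> continuity_pt (fun t => f t * g t) x.
Proof. intros; apply (continuity_pt_mult f g); assumption. Qed.
Lemma cp_div f g x : continuity_pt f x -> continuity_pt g x -> g x <> 0 -> continuity_pt (fun t => f t / g t) x.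
Proof. intros; apply (continuity_pt_div f g); assumption. Qed.
Lemma cp_const (c x : R) : continuity_pt (fun _ => c) x.
Proof. apply continuity_pt_const. intros u v; reflexivity. Qed.
Lemma cp_pow f n x : continuity_pt f x -> continuity_pt (fun t => f t ^ n) x.
Proof.
  intro H. induction n as [|n IH].
  - simpl. apply cp_const.
  - simpl. apply (cp_mult f (fun t => f t ^ n)); assumption.
Qed.
Lemma cp_sqrt f x : continuity_pt f x -> 0 <= f x -> continuity_pt (fun t => sqrt (f t)) x.
Proof. intros H H0. apply (continuity_pt_comp f sqrt); [assumption|apply continuity_pt_sqrt; assumption]. Qed.

Lemma cp_opp f x : continuity_pt f x -> continuity_pt (fun t => - f t) x.
Proof. intros; apply (continuity_pt_opp f); assumption. Qed.
Lemma cp_inv f x : continuity_pt f x -> f x <> 0 -> continuity_pt (fun t => / f t) x.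
Proof. intros. apply (cp_div (fun _ => 1) f x) in H; [|apply cp_const|assumption].
  eapply continuity_pt_ext; [|exact H]. intro; simpl; field_simplify. reflexivity. Abort.

Ltac cont := repeat (first [ apply cp_const | apply cp_minus | apply cp_div | apply cp_plus | apply cp_mult | apply cp_opp
   | apply cp_pow | apply cp_sqrt | apply cp_const | assumption ]).

Lemma cont_conv f x : continuous f x -> continuity_pt f x.
Proof. intro H. apply continuity_pt_filterlim. exact H. Qed.
Lemma cont_conv' f x : continuity_pt f x -> continuous f x.
Proof. intro H. apply continuity_pt_filterlim. exact H. Qed.

Lemma Fc_cont (g : R -> pt) x :
  continuity_pt (fun t => fst (g t)) x -> continuity_pt (fun t => snd (g t)) x ->
  continuity_pt (Derive (fun s => fst (g s))) x -> continuity_pt (Derive (fun s => snd (g s))) x ->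
  pdot (g x) (g x) < rK^2 ->
  continuity_pt (fun t => Fc (g t) (dcurve g t)) x.
Proof.
  intros H1 H2 H3 H4 Hz. destruct rK_bounds as [Hr0 Hr1].
  unfold Fc, pdot, dcurve in *. cbn [fst snd] in *.
  cont; try (intro; nra).
  set (p := fst (g x) * Derive (fun s : R => fst (g s)) x + snd (g x) * Derive (fun s : R => snd (g s)) x).
  assert (0 <= p^2) by apply pow2_ge_0.
  set (u := Derive (fun s : R => fst (g s)) x). set (v := Derive (fun s : R => snd (g s)) x).
  assert (0 <= u*u + v*v) by nra. nra.
Qed.

Definition G (a z : pt) : R := - ln (rK^2 - pdot z a) + /2 * ln (1 - pdot z z).

Lemma dG_cont (a : pt) (g : R -> pt) x :
  continuity_pt (fun t => fst (g t)) x -> continuity_pt (fun t => snd (g t)) x ->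
  continuity_pt (Derive (fun s => fst (g s))) x -> continuity_pt (Derive (fun s => snd (g s))) x ->
  pdot (g x) (g x) < rK^2 -> pdot a a = rK^2 ->
  continuity_pt (fun t => dG a (g t) (dcurve g t)) x.
Proof.
  intros H1 H2 H3 H4 Hz Ha. destruct rK_bounds as [Hr0 Hr1].
  assert (HD : pdot (g x) a < rK^2).
  { assert (H := CS (g x) a). rewrite Ha in H. assert (0 <= pdot (g x) (g x)) by apply pdot_ge0. nra. }
  unfold dG, pdot, dcurve in *. cbn [fst snd] in *.
  cont; intro; nra.
Qed.

Lemma G_deriv_gen (g1 g2 : R -> R) a1 a2 c x : ex_derive g1 x -> ex_derive g2 x ->
  0 < c - (g1 x*a1 + g2 x*a2) -> 0 < 1 - (g1 x*g1 x + g2 x*g2 x) ->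
  is_derive (fun t => - ln (c - (g1 t * a1 + g2 t * a2)) + /2 * ln (1 - (g1 t * g1 t + g2 t * g2 t))) x
   ((a1 * Derive g1 x + a2 * Derive g2 x)/(c - (g1 x * a1 + g2 x * a2))
    - (g1 x * Derive g1 x + g2 x * Derive g2 x)/(1 - (g1 x * g1 x + g2 x * g2 x))).
Proof.
  intros H1 H2 Hc Hz.
  auto_derive.
  - repeat split; auto; lra.
  - change (Derive (fun x0 : R => g1 x0) x) with (Derive g1 x).
    change (Derive (fun x0 : R => g2 x0) x) with (Derive g2 x).
    set (D1 := Derive g1 x). set (D2 := Derive g2 x).
    unfold Rminus. field. lra.
Qed.

Lemma G_deriv (a : pt) (g : R -> pt) x :
  ex_derive (fun s => fst (g s)) x -> ex_derive (fun s => snd (g s)) x ->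
  pdot (g x) (g x) < rK^2 -> pdot a a = rK^2 ->
  is_derive (fun t => G a (g t)) x (dG a (g x) (dcurve g x)).
Proof.
  intros H1 H2 Hz Ha. destruct rK_bounds as [Hr0 Hr1].
  assert (HD : pdot (g x) a < rK^2).
  { assert (H := CS (g x) a). rewrite Ha in H. assert (0 <= pdot (g x) (g x)) by apply pdot_ge0. nra. }
  unfold G, dG, pdot, dcurve in *. cbn [fst snd] in *.
  apply (G_deriv_gen (fun t => fst (g t)) (fun t => snd (g t))); [exact H1|exact H2|lra|nra].
Qed.

Lemma C1_conts (g : R -> pt) (t0 : R) : Defs.C1 g ->
  continuity_pt (fun t => fst (g t)) t0 /\ continuity_pt (fun t => snd (g t)) t0 /\
  continuity_pt (Derive (fun s => fst (g s))) t0 /\ continuity_pt (Derive (fun s => snd (g s))) t0.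
Proof.
  intro H. destruct (H t0) as (H1 & H2 & H3 & H4).
  split; [|split; [|split]]; apply cont_conv; try assumption.
  - exact (ex_derive_continuous (fun s => fst (g s)) t0 H1).
  - exact (ex_derive_continuous (fun s => snd (g s)) t0 H2).
Qed.

Lemma ftc_piece a g t0 t1 : Defs.C1 g -> t0 < t1 ->
  (forall t, t0 <= t <= t1 -> pdot (g t) (g t) < rK^2) -> pdot a a = rK^2 ->
  is_RInt (fun t => dG a (g t) (dcurve g t)) t0 t1 (G a (g t1) - G a (g t0)).
Proof.
  intros HC Ht Hd Ha.

  apply (is_RInt_derive (fun t => G a (g t))); rewrite Rmin_left, Rmax_right by lra; intros t Hti.
  - destruct (HC t) as (H1 & H2 & _). apply G_deriv; auto.
  - destruct (C1_conts g t HC) as (H1 & H2 & H3 & H4). apply cont_conv'. apply dG_cont; auto.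
Qed.

Lemma piece_lower a g t0 t1 : Defs.C1 g -> t0 < t1 ->
  (forall t, t0 <= t <= t1 -> pdot (g t) (g t) < rK^2) -> pdot a a = rK^2 ->
  G a (g t1) - G a (g t0) <= RInt (fun t => FK (g t) (dcurve g t)) t0 t1.
Proof.
  intros HC Ht Hd Ha.
  assert (HI := ftc_piece a g t0 t1 HC Ht Hd Ha).
  rewrite <- (is_RInt_unique _ _ _ _ HI).
  rewrite (RInt_ext (fun t => FK (g t) (dcurve g t)) (fun t => Fc (g t) (dcurve g t))).
  2:{ rewrite Rmin_left, Rmax_right by lra. intros t Hti. apply FK_Fc, Hd; lra. }
  assert (E1 : ex_RInt (fun t => dG a (g t) (dcurve g t)) t0 t1) by (exists (G a (g t1) - G a (g t0)); exact HI).
  assert (E2 : ex_RInt (fun t => Fc (g t) (dcurve g t)) t0 t1).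
  { apply (@ex_RInt_continuous R_CompleteNormedModule). rewrite Rmin_left, Rmax_right by lra. intros t Hti.
    destruct (C1_conts g t HC) as (H1 & H2 & H3 & H4). apply cont_conv'. apply Fc_cont; auto. }
  apply (RInt_le _ _ _ _ (Rlt_le _ _ Ht) E1 E2).
  - intros t Hti. rewrite <- FK_Fc by (apply Hd; lra). apply calib; [apply Hd; lra|assumption].
Qed.

Lemma last_default (l : list R) d d' : l <> nil -> last l d = last l d'.
Proof.
  induction l as [|x l IH]; intro H; [contradiction H; reflexivity|].
  destruct l as [|y l]; [reflexivity|].
  change (last (y :: l) d = last (y :: l) d'). apply IH. discriminate.
Qed.

Lemma last_cons (t1 t0 : R) ts : last (t1 :: ts) t0 = last ts t1.
Proof.
  destruct ts as [|r ts]; [reflexivity|].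
  change (last (r :: ts) t0 = last (r :: ts) t1). apply last_default. discriminate.
Qed.

Lemma pw_last_ge sigma gs i t0 ts : pw_ok sigma gs i t0 ts -> t0 <= last ts t0.
Proof.
  revert i t0. induction ts as [|t1 ts IH]; intros i t0 H.
  - simpl. lra.
  - rewrite last_cons. destruct H as (H1 & _ & _ & H4). specialize (IH _ _ H4). lra.
Qed.

Lemma pw_lower a sigma gs i t0 ts : pdot a a = rK^2 -> pw_ok sigma gs i t0 ts ->
  (forall t, t0 <= t <= last ts t0 -> pdot (sigma t) (sigma t) < rK^2) ->
  G a (sigma (last ts t0)) - G a (sigma t0) <= pw_len gs i t0 ts.
Proof.
  intro Ha. revert i t0. induction ts as [|t1 ts IH]; intros i t0 H Hd.
  - simpl. lra.
  - rewrite last_cons in *. destruct H as (H1 & H2 & H3 & H4).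
    assert (Hl := pw_last_ge _ _ _ _ _ H4).
    simpl pw_len.
    assert (P := piece_lower a (gs i) t0 t1 H2 H1).
    rewrite (H3 t1), (H3 t0) in P by lra.
    assert (Q := IH (S i) t1 H4).
    assert (P' : G a (sigma t1) - G a (sigma t0) <= RInt (fun t : R => FK (gs i t) (dcurve (gs i) t)) t0 t1).
    { apply P; [|exact Ha]. intros t Ht. rewrite H3 by lra. apply Hd. lra. }
    assert (Q' : G a (sigma (last ts t1)) - G a (sigma t1) <= pw_len gs (S i) t1 ts).
    { apply Q. intros t Ht. apply Hd. lra. }
    lra.
Qed.

Lemma root_gt1' P0 R0 q W s : 0 < s -> 0 < W -> P0 < R0 -> P0 + 2*q + W < R0 ->
  W*s^2 + 2*q*s + P0 - R0 = 0 -> 1 < s.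
Proof.
  intros Hs HW H0 H1 E.
  destruct (Rlt_le_dec 1 s) as [|Hle]; [assumption|exfalso].
  assert (Id : W*s^2 + 2*q*s + P0 - R0 = (1-s)*(P0-R0) + s*(P0+2*q+W-R0) + s*(s-1)*W) by ring.
  assert (A1 : (1-s)*(P0-R0) <= 0) by nra.
  assert (A2 : s*(P0+2*q+W-R0) < 0) by nra.
  assert (A3 : s*(s-1)*W <= 0).
  { assert (s*(s-1) <= 0) by nra. nra. }
  lra.
Qed.

Lemma pnorm_lt_conv p rho : 0 < rho -> pdot p p < rho^2 -> pnorm p < rho.
Proof.
  intros Hr H. destruct (Rlt_le_dec (pnorm p) rho) as [|Hle]; [assumption|].
  exfalso. assert (pnorm p ^ 2 >= rho ^2) by nra. rewrite pnorm_sq in H0. lra.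
Qed.

Section Seg.
End Seg.

Lemma seg_D1 (x y : pt) t :
  Derive (fun s => fst (padd x (pscal s (psub y x)))) t = fst y - fst x.
Proof.
  apply is_derive_unique. unfold padd, pscal, psub; cbn [fst snd].
  auto_derive; [exact I|ring].
Qed.

Lemma seg_D2 (x y : pt) t :
  Derive (fun s => snd (padd x (pscal s (psub y x)))) t = snd y - snd x.
Proof.
  apply is_derive_unique. unfold padd, pscal, psub; cbn [fst snd].
  auto_derive; [exact I|ring].
Qed.

Lemma seg_C1 (x y : pt) : Defs.C1 (fun s => padd x (pscal s (psub y x))).
Proof.
  intro t. split; [|split; [|split]].
  - unfold padd, pscal, psub; cbn [fst snd]. auto_derive. exact I.
  - unfold padd, pscal, psub; cbn [fst snd]. auto_derive. exact I.
  - replace (Derive (fun s => fst (padd x (pscal s (psub y x))))) with (fun _ : R => fst y - fst x)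
      by (apply functional_extensionality; intro; symmetry; apply seg_D1).
    apply continuous_const.
  - replace (Derive (fun s => snd (padd x (pscal s (psub y x))))) with (fun _ : R => snd y - snd x)
      by (apply functional_extensionality; intro; symmetry; apply seg_D2).
    apply continuous_const.
Qed.

Lemma seg_dcurve (x y : pt) t : dcurve (fun s => padd x (pscal s (psub y x))) t = psub y x.
Proof. unfold dcurve. rewrite seg_D1, seg_D2. reflexivity. Qed.

Lemma seg_dom (x y : pt) t : pdot x x < rK^2 -> pdot y y < rK^2 -> 0 <= t <= 1 ->
  pdot (padd x (pscal t (psub y x))) (padd x (pscal t (psub y x))) < rK^2.
Proof.
  intros Hx Hy Ht.
  assert (Id : (1-t)*pdot x x + t*pdot y y - pdot (padd x (pscal t (psub y x))) (padd x (pscal t (psub y x)))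
     = t*(1-t)*pdot (psub y x) (psub y x))
    by (destruct x, y; unfold pdot, padd, pscal, psub; simpl; ring).
  assert (0 <= pdot (psub y x) (psub y x)) by apply pdot_ge0.
  assert (0 <= t*(1-t)) by nra.
  assert (0 <= t*(1-t)*pdot (psub y x) (psub y x)) by nra.
  assert ((1-t)*(rK^2 - pdot x x) + t*(rK^2 - pdot y y) > 0).
  { destruct (Req_dec t 0) as [E|E].
    - subst t. nra.
    - assert (0 < t) by lra. assert (0 < t*(rK^2 - pdot y y)) by nra.
      assert (0 <= (1-t)*(rK^2 - pdot x x)) by nra. lra. }
  lra.
Qed.

Lemma value_id (x y a : pt) s0 : pdot x x < rK^2 -> pdot y y < rK^2 -> pdot a a = rK^2 ->
  a = padd x (pscal s0 (psub y x)) ->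
  ln (sinh (dK x a) / sinh (dK y a)) = G a y - G a x.
Proof.
  intros Hx Hy Ha Hae. destruct rK_bounds as [Hr0 Hr1].
  assert (Hr2 : rK^2 < 1) by nra.
  assert (Hxa : x <> a) by (intro E; subst x; lra).
  assert (Hya : y <> a) by (intro E; subst y; lra).
  destruct (dK_facts x a) as (_ & Hx2 & Hsx); [lra|lra|assumption|].
  destruct (dK_facts y a) as (_ & Hy2 & Hsy); [lra|lra|assumption|].
  assert (HDx : pdot x a < rK^2).
  { assert (H := CS x a). rewrite Ha in H. assert (0 <= pdot x x) by apply pdot_ge0. nra. }
  assert (HDy : pdot y a < rK^2).
  { assert (H := CS y a). rewrite Ha in H. assert (0 <= pdot y y) by apply pdot_ge0. nra. }
  set (sx := sinh (dK x a)) in *. set (sy := sinh (dK y a)) in *.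
  set (Dx := rK^2 - pdot x a). set (Dy := rK^2 - pdot y a).
  assert (Key : (pdot x (psub a x) ^ 2 + (1 - pdot x x) * pdot (psub a x) (psub a x)) * Dy^2
              = (pdot y (psub a y) ^ 2 + (1 - pdot y y) * pdot (psub a y) (psub a y)) * Dx^2).
  { unfold Dx, Dy. rewrite <- Ha. rewrite Hae. destruct x, y; unfold pdot, padd, pscal, psub; simpl. ring. }
  rewrite <- Hx2, <- Hy2 in Key.
  assert (K2 : (sx^2*Dy^2*(1-pdot x x)) * (1 - pdot a a) = (sy^2*Dx^2*(1-pdot y y)) * (1 - pdot a a)).
  { transitivity (sx ^ 2 * ((1 - pdot x x) * (1 - pdot a a)) * Dy ^ 2); [ring|]. rewrite Key. ring. }
  apply Rmult_eq_reg_r in K2; [|lra].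
  assert (Hl := f_equal ln K2).
  assert (Hsx2 : 0 < sx^2) by nra. assert (Hsy2 : 0 < sy^2) by nra.
  assert (HDx2 : 0 < Dx^2) by (unfold Dx; nra). assert (HDy2 : 0 < Dy^2) by (unfold Dy; nra).
  assert (H1x : 0 < 1 - pdot x x) by lra. assert (H1y : 0 < 1 - pdot y y) by lra.
  rewrite (ln_mult (sx^2*Dy^2)) in Hl; [|apply Rmult_lt_0_compat; lra|lra].
  rewrite (ln_mult (sy^2*Dx^2)) in Hl; [|apply Rmult_lt_0_compat; lra|lra].
  rewrite (ln_mult (sx^2)) in Hl; [|lra|lra].
  rewrite (ln_mult (sy^2)) in Hl; [|lra|lra].
  rewrite (ln_pow sx), (ln_pow sy), (ln_pow Dx), (ln_pow Dy) in Hl by (unfold Dx, Dy; lra).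
  replace (INR 2) with 2 in Hl by (simpl; ring).
  unfold G. fold Dx Dy. unfold Rdiv. rewrite ln_mult, ln_Rinv by (try apply Rinv_0_lt_compat; lra).
  unfold Dx, Dy in *. lra.
Qed.

Theorem mainTheorem3 (x y : pt) :
  pnorm x < rK -> pnorm y < rK -> x <> y ->
  is_inf (curve_lengths x y)
    (ln (sinh (dK x (ray_hit rK x (psub y x))) /
         sinh (dK y (ray_hit rK x (psub y x))))).
Proof.
  intros Hx Hy Hxy. destruct rK_bounds as [Hr0 Hr1].
  apply pnorm_lt in Hx; [|lra]. apply pnorm_lt in Hy; [|lra].
  assert (Hw : psub y x <> (0,0)) by (apply psub_nz; assumption).
  assert (HW := pt_nz_pos _ Hw).
  destruct (ray_hit_spec rK x (psub y x) Hr0 Hx Hw) as (s0 & Hs0 & Hae & Ha).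
  set (a := ray_hit rK x (psub y x)) in *.
  assert (Hs1 : 1 < s0).
  { apply (root_gt1' (pdot x x) (rK^2) (pdot x (psub y x)) (pdot (psub y x) (psub y x))); try assumption.
    - replace (pdot x x + 2 * pdot x (psub y x) + pdot (psub y x) (psub y x)) with (pdot y y)
        by (destruct x, y; unfold pdot, psub; simpl; ring). assumption.
    - rewrite <- Ha, Hae. destruct x, y; unfold pdot, padd, pscal, psub; simpl. ring. }
  rewrite (value_id x y a s0 Hx Hy Ha Hae).
  split.
  - intros l (aa & b & sigma & ts & gs & Hne & Hlast & Hok & Hsa & Hsb & Hdom & Hl).
    subst l.
    assert (P := pw_lower a sigma gs 0 aa ts Ha Hok).
    rewrite Hlast, Hsa, Hsb in P. apply P.
    intros t Ht. apply pnorm_lt; [lra|]. apply Hdom. exact Ht.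
  - intros m' Hm'. apply Hm'.
    set (sigma := fun s => padd x (pscal s (psub y x))).
    assert (Hdom : forall t, 0 <= t <= 1 -> pdot (sigma t) (sigma t) < rK^2)
      by (intros; apply seg_dom; assumption).
    assert (Hs0y : sigma 1 = y) by (unfold sigma; destruct x, y; unfold padd, pscal, psub; simpl; f_equal; ring).
    assert (Hs0x : sigma 0 = x) by (unfold sigma; destruct x, y; unfold padd, pscal, psub; simpl; f_equal; ring).
    exists 0, 1, sigma, (1 :: nil), (fun _ => sigma).
    split; [discriminate|]. split; [reflexivity|]. split.
    { simpl. split; [lra|]. split; [apply seg_C1|]. split; [intros; reflexivity|exact I]. }
    split; [assumption|]. split; [assumption|]. split.
    { intros t Ht. apply pnorm_lt_conv; [lra|]. apply Hdom; assumption. }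
    simpl pw_len. rewrite Rplus_0_r.
    assert (HI := ftc_piece a sigma 0 1 (seg_C1 x y) Rlt_0_1 Hdom Ha).
    rewrite Hs0y, Hs0x in HI.
    rewrite <- (is_RInt_unique _ _ _ _ HI).
    apply RInt_ext. rewrite Rmin_left, Rmax_right by lra. intros t Ht.
    unfold sigma at 2 4. rewrite seg_dcurve.
    assert (Hz := Hdom t (conj (Rlt_le _ _ (proj1 Ht)) (Rlt_le _ _ (proj2 Ht)))).
    assert (Hn : pdot (padd (sigma t) (pscal (s0 - t) (psub y x))) (padd (sigma t) (pscal (s0 - t) (psub y x))) = rK^2).
    { rewrite <- Ha, Hae. unfold sigma. destruct x, y; unfold pdot, padd, pscal, psub; simpl. ring. }
    rewrite (FK_t (sigma t) (psub y x) (s0 - t) Hz Hw) by lra.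
    unfold dG.
    assert (HD : pdot (sigma t) a < rK^2).
    { assert (H := CS (sigma t) a). rewrite Ha in H. assert (0 <= pdot (sigma t) (sigma t)) by apply pdot_ge0. nra. }
    assert (HDe : rK^2 - pdot (sigma t) a = (s0 - t) * pdot a (psub y x)).
    { rewrite <- Ha, Hae. unfold sigma. destruct x, y; unfold pdot, padd, pscal, psub; simpl. ring. }
    assert (Hpa : pdot a (psub y x) <> 0) by (intro E; rewrite E in HDe; lra).
    rewrite HDe. change (@eq R (pdot a (psub y x) / ((s0 - t) * pdot a (psub y x)) - pdot (sigma t) (psub y x) / (1 - pdot (sigma t) (sigma t))) (/ (s0 - t) - pdot (sigma t) (psub y x) / (1 - pdot (sigma t) (sigma t)))).
    field. repeat split; try assumption; nra.
Qed.
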